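(* Let $X$, $Y$ be disjoint sets of cardinality at least two, and suppose $M\le\mathrm{Sym}(X)$ and $N\le\mathrm{Sym}(Y)$ are transitive. If, in their respective permutation topologies, $M$ is compactly generated and every point stabiliser in $M$ is compact, and $N$ is compact, then $M\boxtimes N$ is compactly generated and every point stabiliser in $M\boxtimes N$ is compact (in the permutation topology of $\mathrm{Sym}(V_Y)$).
   Context: For a set $V$, the permutation topology on $\mathrm{Sym}(V)$ is the topology of pointwise convergence (pointwise stabilisers of finite subsets form a basis of identity neighbourhoods). Let $T$ be the $(|X|,|Y|)$-biregular tree with natural bipartition $VT=V_X\sqcup V_Y$ (vertices in $V_X$ have valency $|X|$, in $V_Y$ valency $|Y|$). $A(v)$, $\overline{A}(v)$ are the sets of arcs (ordered pairs of adjacent vertices) with origin, resp. terminus, $v$. A legal colouring is a map $c:AT\to X\cup Y$ restricting to a bijection $A(v)\to X$ for $v\in V_X$, to a bijection $A(v)\to Y$ for $v\in V_Y$, and constant on each $\overline{A}(v)$. $U_c(M,N)$ is the group of $g\in\mathrm{Aut}(T)$ with $gV_X=V_X$ and $c|_{A(gv)}\circ g|_{A(v)}\circ(c|_{A(v)})^{-1}$ in $M$ for $v\in V_X$ and in $N$ for $v\in V_Y$. The box product $M\boxtimes N\le\mathrm{Sym}(V_Y)$ is the group induced on $V_Y$ by $U_c(M,N)$. *)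

(* Defs.v *)
From Stdlib Require Import List.
Import ListNotations.


Definition is_perm {A : Type} (f : A -> A) : Prop :=
  exists g : A -> A, (forall x, g (f x) = x) /\ (forall y, f (g y) = y).

Definition perm_group {A : Type} (G : (A -> A) -> Prop) : Prop :=
  (forall g, G g -> is_perm g) /\
  G (fun x => x) /\
  (forall g h, G g -> G h -> G (fun x => g (h x))) /\
  (forall g, G g -> exists h, G h /\ (forall x, h (g x) = x) /\ (forall x, g (h x) = x)).

Definition transitive {A : Type} (G : (A -> A) -> Prop) : Prop :=
  forall a b : A, exists g, G g /\ g a = b.

Definition stab {A : Type} (G : (A -> A) -> Prop) (a : A) : (A -> A) -> Prop :=
  fun g => G g /\ g a = a.

Definition agree_on {A B : Type} (F : list A) (f g : A -> B) : Prop :=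
  forall a, In a F -> f a = g a.

Definition pw_open {A : Type} (U : (A -> A) -> Prop) : Prop :=
  forall f, U f -> exists F : list A, forall h, agree_on F h f -> U h.

Definition pw_compact {A : Type} (K : (A -> A) -> Prop) : Prop :=
  forall (I : Type) (O : I -> (A -> A) -> Prop),
    (forall i, pw_open (O i)) ->
    (forall f, K f -> exists i, O i f) ->
    exists l : list I, forall f, K f -> exists i, In i l /\ O i f.

Definition generates {A : Type} (G K : (A -> A) -> Prop) : Prop :=
  (forall k, K k -> G k) /\
  (forall H, perm_group H -> (forall k, K k -> H k) -> forall g, G g -> H g).

Definition compactly_generated {A : Type} (G : (A -> A) -> Prop) : Prop :=
  exists K, pw_compact K /\ generates G K.

Fixpoint walk {V : Type} (E : V -> V -> Prop) (u : V) (p : list V) (v : V) : Prop :=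
  match p with
  | [] => u = v
  | w :: p' => E u w /\ walk E w p' v
  end.

Definition is_tree {V : Type} (E : V -> V -> Prop) : Prop :=
  (forall u v, E u v -> E v u) /\
  (forall u, ~ E u u) /\
  (forall u v, exists p, walk E u p v) /\
  (* no cycles: no list v0,...,vn (n >= 2) of distinct vertices with
     consecutive ones adjacent and vn adjacent to v0 *)
  (forall (v0 : V) (p : list V),
      NoDup (v0 :: p) -> 2 <= length p ->
      walk E v0 p (last p v0) -> ~ E (last p v0) v0).

(* inX describes the bipartition V_X (inX v = true) / V_Y (inX v = false) *)
Definition bipartition {V : Type} (E : V -> V -> Prop) (inX : V -> bool) : Prop :=
  forall u v, E u v -> inX u = negb (inX v).

(* legal colouring c : AT -> X ⊔ Y; the arc (u,v) gets colour c u v *)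
Definition legal_colouring {V X Y : Type} (E : V -> V -> Prop) (inX : V -> bool)
    (c : V -> V -> X + Y) : Prop :=
  (forall v, inX v = true ->
     (forall w, E v w -> exists x, c v w = inl x) /\
     (forall w w', E v w -> E v w' -> c v w = c v w' -> w = w') /\
     (forall x, exists w, E v w /\ c v w = inl x)) /\
  (forall v, inX v = false ->
     (forall w, E v w -> exists y, c v w = inr y) /\
     (forall w w', E v w -> E v w' -> c v w = c v w' -> w = w') /\
     (forall y, exists w, E v w /\ c v w = inr y)) /\
  (forall v u u', E u v -> E u' v -> c u v = c u' v).

Definition is_aut {V : Type} (E : V -> V -> Prop) (g : V -> V) : Prop :=
  is_perm g /\ (forall u v, E u v <-> E (g u) (g v)).

Definition U_c {V X Y : Type} (E : V -> V -> Prop) (inX : V -> bool)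
    (c : V -> V -> X + Y) (M : (X -> X) -> Prop) (N : (Y -> Y) -> Prop)
    (g : V -> V) : Prop :=
  is_aut E g /\
  (forall v, inX (g v) = inX v) /\
  (forall v, inX v = true ->
     exists s, M s /\
       forall w x, E v w -> c v w = inl x -> c (g v) (g w) = inl (s x)) /\
  (forall v, inX v = false ->
     exists s, N s /\
       forall w y, E v w -> c v w = inr y -> c (g v) (g w) = inr (s y)).

Definition VY {V : Type} (inX : V -> bool) : Type := { v : V | inX v = false }.

Definition box_product {V X Y : Type} (E : V -> V -> Prop) (inX : V -> bool)
    (c : V -> V -> X + Y) (M : (X -> X) -> Prop) (N : (Y -> Y) -> Prop)
    (h : VY inX -> VY inX) : Prop :=
  exists g, U_c E inX c M N g /\ forall y : VY inX, proj1_sig (h y) = g (proj1_sig y).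

(* Main.v *)
Require Import Defs.
From Stdlib Require Import List.
From Stdlib Require Import Lia ClassicalEpsilon Classical FunctionalExtensionality.
Import ListNotations.

Definition pick {T : Type} (d : T) (P : T -> Prop) : T :=
  match excluded_middle_informative (exists a, P a) with
  | left h => proj1_sig (constructive_indefinite_description _ h)
  | right _ => d
  end.

Lemma pick_spec {T : Type} (d : T) (P : T -> Prop) : (exists a, P a) -> P (pick d P).
Proof.
  intro H. unfold pick. destruct (excluded_middle_informative _) as [h|h].
  - exact (proj2_sig (constructive_indefinite_description _ h)).
  - contradiction.
Qed.

Section Topo.
Context {A : Type}.

Lemma compact_orbit (K : (A -> A) -> Prop) : pw_compact K ->
  forall a, exists L, forall k, K k -> In (k a) L.
Proof.
  intros HK a.
  destruct (HK A (fun b f => f a = b)) as [l Hl].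
  - intros b f Hf. exists [a]. intros h Hh. rewrite Hh by (left; reflexivity). exact Hf.
  - intros f _. exists (f a). reflexivity.
  - exists l. intros k Hk. destruct (Hl k Hk) as [i [Hi Hi']]. rewrite Hi'. exact Hi.
Qed.

Lemma compact_closed (K : (A -> A) -> Prop) : pw_compact K ->
  forall f, (forall F, exists k, K k /\ agree_on F k f) -> K f.
Proof.
  intros HK f Hf. apply NNPP. intro Hn.
  destruct (HK A (fun a h => h a <> f a)) as [l Hl].
  - intros a g Hg. exists [a]. intros h Hh. rewrite Hh by (left; reflexivity). exact Hg.
  - intros g Hg. apply NNPP. intro H. apply Hn.
    assert (g = f) as <-; [|exact Hg].
    apply functional_extensionality. intro a. apply NNPP. intro H'. apply H. exists a. exact H'.
  - destruct (Hf l) as [k [Hk Hkf]]. destruct (Hl k Hk) as [i [Hi Hi']].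
    apply Hi'. apply Hkf. exact Hi.
Qed.

Lemma compact_union (K1 K2 : (A -> A) -> Prop) : pw_compact K1 -> pw_compact K2 ->
  pw_compact (fun f => K1 f \/ K2 f).
Proof.
  intros H1 H2 I O Ho Hc.
  destruct (H1 I O Ho) as [l1 Hl1]. { intros f Hf. apply Hc. left; exact Hf. }
  destruct (H2 I O Ho) as [l2 Hl2]. { intros f Hf. apply Hc. right; exact Hf. }
  exists (l1 ++ l2). intros f [Hf|Hf].
  - destruct (Hl1 f Hf) as [i [Hi Hi']]. exists i. split; [apply in_or_app; left|]; assumption.
  - destruct (Hl2 f Hf) as [i [Hi Hi']]. exists i. split; [apply in_or_app; right|]; assumption.
Qed.

Lemma compact_subsingleton (K : (A -> A) -> Prop) :
  (forall f g, K f -> K g -> f = g) -> pw_compact K.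
Proof.
  intros Hs I O Ho Hc.
  destruct (classic (exists f, K f)) as [[f Hf]|Hn].
  - destruct (Hc f Hf) as [i Hi]. exists [i]. intros g Hg. exists i. split; [left; reflexivity|].
    rewrite (Hs g f Hg Hf). exact Hi.
  - exists []. intros g Hg. exfalso. apply Hn. exists g. exact Hg.
Qed.

Lemma agree_on_app (F1 F2 : list A) (f g : A -> A) :
  agree_on F1 f g -> agree_on F2 f g -> agree_on (F1 ++ F2) f g.
Proof.
  intros H1 H2 a Ha. apply in_app_or in Ha. destruct Ha; auto.
Qed.

End Topo.

Lemma compact_image {A B : Type} (rho : (A -> A) -> (B -> B))
  (Hcont : forall g (L : list B), exists L' : list A, forall g', agree_on L' g' g -> agree_on L (rho g') (rho g))
  (K : (A -> A) -> Prop) : pw_compact K -> pw_compact (fun h => exists g, K g /\ h = rho g).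
Proof.
  intros HK I O Ho Hc.
  destruct (HK I (fun i g => O i (rho g))) as [l Hl].
  - intros i g Hg. destruct (Ho i (rho g) Hg) as [F HF].
    destruct (Hcont g F) as [L' HL']. exists L'. intros h Hh. apply HF. apply HL'. exact Hh.
  - intros g Hg. apply Hc. exists g. split; [exact Hg|reflexivity].
  - exists l. intros h [g [Hg ->]]. apply Hl. exact Hg.
Qed.

Section Konig.
Context {A : Type} (K : (A -> A) -> Prop).
Hypothesis Hfin : forall a, exists L, forall k, K k -> In (k a) L.
Hypothesis Hcl : forall f, (forall F, exists k, K k /\ agree_on F k f) -> K f.
Variable T : nat -> list A.
Hypothesis Tmono : forall n a, In a (T n) -> In a (T (S n)).
Hypothesis Tcov : forall a, exists n, In a (T n).

Lemma T_le : forall n m a, n <= m -> In a (T n) -> In a (T m).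
Proof. intros n m a H. induction H; auto. Qed.

Lemma T_fin : forall F : list A, exists n, forall a, In a F -> In a (T n).
Proof.
  induction F as [|a F IH].
  - exists 0. intros a [].
  - destruct IH as [n Hn]. destruct (Tcov a) as [m Hm]. exists (n + m).
    intros b [<-|Hb].
    + apply (T_le m); [lia|exact Hm].
    + apply (T_le n); [lia|auto].
Qed.

Lemma konig : pw_compact K.
Proof.
  intros I O Ho Hc. apply NNPP. intro Hno.
  set (sat := fun (s : list (A * A)) (f : A -> A) => forall a b, In (a, b) s -> f a = b).
  set (bad := fun s => ~ exists l : list I, forall f, K f -> sat s f -> exists i, In i l /\ O i f).
  assert (bad_ne : forall s, bad s -> exists f, K f /\ sat s f).
  { intros s Hs. apply NNPP. intro H. apply Hs. exists []. intros f Hf Hsf. exfalso. apply H. exists f. auto. }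
  assert (bad_ext : forall s a, bad s -> exists b, bad (s ++ [(a, b)])).
  { intros s a Hs. apply NNPP. intro H. apply Hs.
    destruct (Hfin a) as [L HL].
    assert (forall L', exists l, forall f, K f -> sat s f -> In (f a) L' -> exists i, In i l /\ O i f) as HH.
    { induction L' as [|b L' IH].
      - exists []. intros f _ _ [].
      - destruct IH as [l' Hl'].
        assert (~ bad (s ++ [(a, b)])) as Hb. { intro Hb. apply H. exists b. exact Hb. }
        apply NNPP in Hb. destruct Hb as [lb Hlb].
        exists (lb ++ l'). intros f Hf Hsf [Hfa|Hfa].
        + destruct (Hlb f Hf) as [i [Hi Hi']].
          * intros a' b' Hab. apply in_app_or in Hab. destruct Hab as [Hab|[Hab|[]]].
            -- apply Hsf; exact Hab.
            -- inversion Hab; subst; auto.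
          * exists i. split; [apply in_or_app; left|]; assumption.
        + destruct (Hl' f Hf Hsf Hfa) as [i [Hi Hi']]. exists i. split; [apply in_or_app; right|]; assumption. }
    destruct (HH L) as [l Hl]. exists l. intros f Hf Hsf. apply Hl; auto. }
  set (pickb := fun (s : list (A * A)) (a : A) => pick a (fun b => bad (s ++ [(a, b)]))).
  assert (pickb_spec : forall s a, bad s -> bad (s ++ [(a, pickb s a)])).
  { intros s a Hs. apply (pick_spec a (fun b => bad (s ++ [(a, b)]))). apply bad_ext; exact Hs. }
  set (ext := fix ext (s : list (A * A)) (l : list A) : list (A * A) :=
         match l with [] => s | a :: l' => ext (s ++ [(a, pickb s a)]) l' end).
  assert (ext_bad : forall l s, bad s -> bad (ext s l)).
  { induction l as [|a l IH]; intros s Hs; simpl; auto. }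
  assert (ext_pre : forall l s, exists t, ext s l = s ++ t).
  { induction l as [|a l IH]; intros s; simpl.
    - exists []. rewrite app_nil_r. reflexivity.
    - destruct (IH (s ++ [(a, pickb s a)])) as [t Ht]. rewrite Ht. exists ((a, pickb s a) :: t).
      rewrite <- app_assoc. reflexivity. }
  assert (ext_mem : forall l s a, In a l -> exists b, In (a, b) (ext s l)).
  { induction l as [|a' l IH]; intros s a Ha; simpl in *.
    - destruct Ha.
    - destruct Ha as [->|Ha].
      + destruct (ext_pre l (s ++ [(a, pickb s a)])) as [t Ht]. rewrite Ht.
        exists (pickb s a). apply in_or_app; left. apply in_or_app; right. left; reflexivity.
      + apply IH; exact Ha. }
  set (asg := fix asg (n : nat) : list (A * A) := match n with 0 => [] | S n' => ext (asg n') (T n') end).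
  assert (asg_bad : forall n, bad (asg n)).
  { induction n as [|n IH]; simpl.
    - intro H. apply Hno. destruct H as [l Hl]. exists l. intros f Hf. apply Hl; auto.
      intros a b [].
    - apply ext_bad. exact IH. }
  assert (asg_pre : forall n m, n <= m -> exists t, asg m = asg n ++ t).
  { intros n m H. induction H.
    - exists []. rewrite app_nil_r. reflexivity.
    - destruct IHle as [t Ht]. simpl. destruct (ext_pre (T m) (asg m)) as [t' Ht'].
      rewrite Ht', Ht. exists (t ++ t'). rewrite app_assoc. reflexivity. }
  assert (asg_cons : forall n m a b b', In (a, b) (asg n) -> In (a, b') (asg m) -> b = b').
  { intros n m a b b' H1 H2.
    destruct (asg_pre n (n + m) ltac:(lia)) as [t1 Ht1].
    destruct (asg_pre m (n + m) ltac:(lia)) as [t2 Ht2].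
    destruct (bad_ne _ (asg_bad (n + m))) as [k [_ Hk]].
    rewrite <- (Hk a b), <- (Hk a b'); auto.
    - rewrite Ht2. apply in_or_app; left; exact H2.
    - rewrite Ht1. apply in_or_app; left; exact H1. }
  assert (asg_mem : forall n a, In a (T n) -> exists b, In (a, b) (asg (S n))).
  { intros n a Ha. simpl. apply ext_mem. exact Ha. }
  set (f := fun (a : A) => pick a (fun b => exists n, In (a, b) (asg n))).
  assert (f_spec : forall n a b, In (a, b) (asg n) -> f a = b).
  { intros n a b H. destruct (pick_spec a (fun b => exists n, In (a, b) (asg n))) as [m Hm].
    - exists b, n. exact H.
    - fold (f a) in Hm. symmetry. eapply asg_cons; eauto. }
  assert (sat_agree : forall F n k, (forall a, In a F -> In a (T n)) -> sat (asg (S n)) k -> agree_on F k f).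
  { intros F n k HF Hk a Ha. destruct (asg_mem n a (HF a Ha)) as [b Hb].
    rewrite (Hk a b Hb). symmetry. eapply f_spec; eauto. }
  assert (Kf : K f).
  { apply Hcl. intro F. destruct (T_fin F) as [n Hn].
    destruct (bad_ne _ (asg_bad (S n))) as [k [Hk Hks]]. exists k. split; auto.
    eapply sat_agree; eauto. }
  destruct (Hc f Kf) as [i Hi]. destruct (Ho i f Hi) as [F HF].
  destruct (T_fin F) as [n Hn]. apply (asg_bad (S n)). exists [i]. intros k Hk Hks.
  exists i. split; [left; reflexivity|]. apply HF. eapply sat_agree; eauto.
Qed.
End Konig.

Section Tree.
Context {V : Type} (E : V -> V -> Prop).

Fixpoint chain (l : list V) : Prop :=
  match l with
  | x :: ((y :: _) as t) => E x y /\ chain t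
  | _ => True
  end.

Definition red (l : list V) : Prop := forall l1 l2 x y, l <> l1 ++ x :: y :: x :: l2.

Lemma last_def (v : V) p d d' : last (v :: p) d = last (v :: p) d'.
Proof. revert v. induction p as [|w p IH]; intro v; [reflexivity|]. exact (IH w). Qed.

Lemma walk_iff a p b : walk E a p b <-> chain (a :: p) /\ last p a = b.
Proof.
  revert a. induction p as [|w p IH]; intro a; simpl.
  - tauto.
  - rewrite IH. destruct p as [|v p]; [simpl; tauto|].
    change (last (w :: v :: p) a) with (last (v :: p) a).
    rewrite (last_def v p a w). simpl chain. tauto.
Qed.

Lemma last_cons_same (a : V) p : last (a :: p) a = last p a.
Proof. destruct p; reflexivity. Qed.

Lemma last_app_ne (l1 l2 : list V) d : l2 <> [] -> last (l1 ++ l2) d = last l2 d.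
Proof.
  intro H. induction l1 as [|x l1 IH]; [reflexivity|].
  rewrite <- app_comm_cons. rewrite <- IH.
  destruct (l1 ++ l2) eqn:e; [destruct l1, l2; try discriminate; congruence|reflexivity].
Qed.

Lemma chain_app_l l1 l2 : chain (l1 ++ l2) -> chain l1.
Proof.
  induction l1 as [|x l1 IH]; simpl; auto.
  destruct l1 as [|y l1]; auto. intros [H1 H2]. split; auto.
Qed.

Lemma chain_app_r l1 l2 : chain (l1 ++ l2) -> chain l2.
Proof.
  induction l1 as [|x l1 IH]; simpl; auto.
  destruct (l1 ++ l2) eqn:e.
  - destruct l1; [simpl in e; subst; simpl; auto|discriminate].
  - intros [_ H]. apply IH. exact H.
Qed.

Lemma chain_mid l1 x y l2 : chain (l1 ++ x :: y :: l2) -> E x y.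
Proof.
  intro H. apply chain_app_r in H. simpl in H. tauto.
Qed.

Lemma chain_join A b B : chain (A ++ [b]) -> chain (b :: B) -> chain (A ++ b :: B).
Proof.
  induction A as [|x A IH]; simpl; auto.
  destruct A as [|y A]; simpl.
  - intros [H1 _] H2. split; auto.
  - intros [H1 H2] H3. split; auto. apply IH; auto.
Qed.

Lemma chain_rev l : (forall u v, E u v -> E v u) -> chain l -> chain (rev l).
Proof.
  intro Hs. induction l as [|x l IH]; simpl; auto.
  intro H. destruct l as [|y l]; simpl; auto.
  destruct H as [H1 H2]. specialize (IH H2). simpl in IH.
  rewrite <- app_assoc. simpl. apply chain_join; auto. simpl. split; auto.
Qed.

Lemma red_tail x t : red (x :: t) -> red t.
Proof. intros H l1 l2 a b e. apply (H (x :: l1) l2 a b). rewrite e. reflexivity. Qed.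

Lemma red_cons x t : red t -> (forall y z t', t = y :: z :: t' -> x <> z) -> red (x :: t).
Proof.
  intros H1 H2 l1 l2 a b e. destruct l1 as [|u l1]; simpl in e.
  - inversion e; subst. apply (H2 b a l2 eq_refl). reflexivity.
  - inversion e; subst. apply (H1 l1 l2 a b eq_refl).
Qed.

Lemma red_cons3 x y z t : red (x :: y :: z :: t) -> x <> z.
Proof. intros H e. subst. apply (H [] t z y). reflexivity. Qed.

Lemma red_nil : red [].
Proof. intros l1 l2 x y e. destruct l1; discriminate. Qed.

Lemma red_one a : red [a].
Proof. apply red_cons; [apply red_nil|]. intros y z t' e; discriminate. Qed.

Lemma red_two a b : red [a; b].
Proof. apply red_cons; [apply red_one|]. intros y z t' e; discriminate. Qed.

Lemma red_rev l : red l -> red (rev l).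
Proof.
  intros H l1 l2 x y e. apply (H (rev l2) (rev l1) x y).
  rewrite <- (rev_involutive l), e. rewrite rev_app_distr. simpl.
  repeat rewrite <- app_assoc. reflexivity.
Qed.

Lemma red_prefix l1 l2 : red (l1 ++ l2) -> red l1.
Proof.
  intros H m1 m2 x y e. apply (H m1 (m2 ++ l2) x y). rewrite e. rewrite <- app_assoc. reflexivity.
Qed.

Lemma red_suffix l1 l2 : red (l1 ++ l2) -> red l2.
Proof.
  intros H m1 m2 x y e. apply (H (l1 ++ m1) m2 x y). rewrite e. rewrite <- app_assoc. reflexivity.
Qed.

Lemma red_junction : forall A b B, red (A ++ [b]) -> red (b :: B) ->
  (forall A' x y B', A = A' ++ [x] -> B = y :: B' -> x <> y) -> red (A ++ b :: B).
Proof.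
  induction A as [|x A IH]; intros b B H1 H2 H3; simpl; auto.
  destruct A as [|y A2]; simpl.
  - apply red_cons; auto. intros y z t' e. inversion e; subst.
    apply (H3 [] x z t'); reflexivity.
  - apply red_cons.
    + apply IH.
      * apply (red_tail x). exact H1.
      * exact H2.
      * intros A' x' y' B' e1 e2. apply (H3 (x :: A') x' y' B'); [rewrite e1; reflexivity|exact e2].
    + intros y' z t' e. simpl in H1. destruct A2 as [|w A3]; simpl in e, H1.
      * injection e as e1 e2 e3. subst z. apply (red_cons3 x y b []). exact H1.
      * injection e as e1 e2 e3. subst z. apply (red_cons3 x y w (A3 ++ [b])). exact H1.
Qed.

Hypothesis Htree : is_tree E.

Lemma tree_sym u v : E u v -> E v u.
Proof. destruct Htree as [H _]. apply H. Qed.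

Lemma tree_irr u : ~ E u u.
Proof. destruct Htree as [_ [H _]]. apply H. Qed.

Lemma red_nodup : forall p a, chain (a :: p) -> red (a :: p) -> NoDup (a :: p).
Proof.
  induction p as [|w p IH]; intros a Hc Hr.
  - constructor; [intros []|constructor].
  - simpl in Hc. destruct Hc as [Haw Hc].
    assert (ND : NoDup (w :: p)). { apply IH; auto. apply (red_tail a). exact Hr. }
    constructor; auto. intros [e|Hin].
    + subst. eapply tree_irr. exact Haw.
    + apply in_split in Hin. destruct Hin as [q [r e]]. subst p.
      destruct q as [|q1 q].
      * simpl in Hr. apply (Hr [] r a w). reflexivity.
      * destruct Htree as [_ [_ [_ Hcyc]]].
        destruct (exists_last (l := w :: q1 :: q) ltac:(discriminate)) as [l [z ez]].
        apply (Hcyc a (w :: q1 :: q)).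
        -- constructor.
           ++ intro Hin. apply (NoDup_remove_2 (w :: q1 :: q) r a ND). apply in_or_app. left. exact Hin.
           ++ apply (NoDup_app_remove_r _ (a :: r)). exact ND.
        -- simpl. lia.
        -- apply walk_iff. split; [|reflexivity].
           apply (chain_app_l (a :: w :: q1 :: q) (a :: r)). exact (conj Haw Hc).
        -- rewrite ez, last_last.
           apply (chain_mid (a :: l) z a r).
           replace ((a :: l) ++ z :: a :: r) with (a :: (l ++ [z]) ++ a :: r) by (rewrite <- app_assoc; reflexivity).
           rewrite <- ez. exact (conj Haw Hc).
Qed.

Lemma rev_head (l : list V) y B d : rev l = y :: B -> y = last l d.
Proof.
  intro e. destruct (exists_last (l := l)) as [l' [z ez]].
  - intro h; subst; discriminate.
  - subst. rewrite rev_app_distr in e. simpl in e. inversion e. rewrite last_last. reflexivity.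
Qed.

Lemma red_uniq_n : forall n p q a, length p + length q <= n ->
  chain (a :: p) -> chain (a :: q) -> red (a :: p) -> red (a :: q) -> last p a = last q a -> p = q.
Proof.
  induction n as [|n IH]; intros p q a Hn Hcp Hcq Hrp Hrq Hl.
  - destruct p; [|simpl in Hn; lia]. destruct q; [reflexivity|simpl in Hn; lia].
  - destruct p as [|p1 p'] using rev_ind; destruct q as [|q1 q'] using rev_ind.
    + reflexivity.
    + exfalso. rewrite last_last in Hl. simpl in Hl. subst q1.
      pose proof (red_nodup _ _ Hcq Hrq) as ND.
      apply (NoDup_remove_2 [] (q' ++ [a]) a ND). simpl. apply in_or_app. right. left. reflexivity.
    + exfalso. rewrite last_last in Hl. simpl in Hl. subst p1.
      pose proof (red_nodup _ _ Hcp Hrp) as ND.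
      apply (NoDup_remove_2 [] (p' ++ [a]) a ND). simpl. apply in_or_app. right. left. reflexivity.
    + rewrite !last_last in Hl. subst q1. rename p1 into b.
      rewrite app_comm_cons in Hcp, Hcq, Hrp, Hrq.
      destruct (classic (last p' a = last q' a)) as [eq|neq].
      * f_equal. apply (IH p' q' a).
        -- rewrite !length_app in Hn. simpl in Hn. lia.
        -- exact (chain_app_l _ _ Hcp).
        -- exact (chain_app_l _ _ Hcq).
        -- exact (red_prefix _ _ Hrp).
        -- exact (red_prefix _ _ Hrq).
        -- exact eq.
      * exfalso.
        assert (HC : chain ((a :: p') ++ b :: rev (a :: q'))).
        { apply chain_join; auto. replace (b :: rev (a :: q')) with (rev ((a :: q') ++ [b])).
          - apply chain_rev; [exact tree_sym|exact Hcq].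
          - rewrite rev_app_distr. reflexivity. }
        assert (HR : red ((a :: p') ++ b :: rev (a :: q'))).
        { apply red_junction; auto.
          - replace (b :: rev (a :: q')) with (rev ((a :: q') ++ [b])).
            + apply red_rev; exact Hrq.
            + rewrite rev_app_distr. reflexivity.
          - intros A' x y B' e1 e2. apply rev_head with (d := a) in e2.
            assert (x = last (a :: p') a) as ex.
            { rewrite e1. rewrite last_last. reflexivity. }
            rewrite ex, e2, !last_cons_same. exact neq. }
        simpl in HC, HR. pose proof (red_nodup _ _ HC HR) as ND.
        apply (NoDup_remove_2 [] _ a ND). simpl. apply in_or_app. right. right.
        apply in_or_app. right. left. reflexivity.
Qed.

Lemma red_uniq p q a : chain (a :: p) -> chain (a :: q) -> red (a :: p) -> red (a :: q) ->
  last p a = last q a -> p = q.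
Proof. apply (red_uniq_n (length p + length q)). lia. Qed.

Lemma red_exists_n : forall n p a, length p <= n -> chain (a :: p) ->
  exists p', chain (a :: p') /\ red (a :: p') /\ last p' a = last p a.
Proof.
  induction n as [|n IH]; intros p a Hn Hc.
  - destruct p; [|simpl in Hn; lia]. exists []. repeat split; auto. apply red_one.
  - destruct (classic (red (a :: p))) as [Hr|Hr].
    + exists p. auto.
    + unfold red in Hr. apply not_all_ex_not in Hr. destruct Hr as [l1 Hr].
      apply not_all_ex_not in Hr. destruct Hr as [l2 Hr].
      apply not_all_ex_not in Hr. destruct Hr as [x Hr].
      apply not_all_ex_not in Hr. destruct Hr as [y Hr]. apply NNPP in Hr.
      assert (HC : chain (l1 ++ x :: l2)).
      { rewrite Hr in Hc. apply chain_join.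
        - apply (chain_app_l _ (y :: x :: l2)). rewrite <- app_assoc. exact Hc.
        - apply (chain_app_r (l1 ++ [x; y])). rewrite <- app_assoc. exact Hc. }
      assert (HL : last (l1 ++ x :: l2) a = last (a :: p) a).
      { rewrite Hr. change (x :: y :: x :: l2) with ([x; y] ++ x :: l2).
        rewrite app_assoc. rewrite (last_app_ne (l1 ++ [x;y])); [|discriminate].
        rewrite last_app_ne; [reflexivity|discriminate]. }
      destruct l1 as [|a' l1].
      * simpl in Hr. injection Hr as e1 e2. subst x p.
        destruct (IH l2 a) as [p' [H1 [H2 H3]]]; auto.
        -- simpl in Hn. lia.
        -- exists p'. repeat split; auto. rewrite H3.
           rewrite <- (last_cons_same a l2), <- (last_cons_same a (y :: a :: l2)). exact HL.
      * simpl in Hr. injection Hr as e1 e2. subst a' p.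
        destruct (IH (l1 ++ x :: l2) a) as [p' [H1 [H2 H3]]]; auto.
        -- rewrite length_app in *. simpl in *. lia.
        -- exists p'. repeat split; auto. rewrite H3.
           rewrite <- (last_cons_same a (l1 ++ x :: l2)), <- (last_cons_same a (l1 ++ x :: y :: x :: l2)). exact HL.
Qed.

Lemma red_exists a b : exists p, chain (a :: p) /\ red (a :: p) /\ last p a = b.
Proof.
  destruct Htree as [_ [_ [Hconn _]]]. destruct (Hconn a b) as [p Hp].
  apply walk_iff in Hp. destruct Hp as [Hc Hl].
  destruct (red_exists_n (length p) p a (le_n _) Hc) as [p' [H1 [H2 H3]]].
  exists p'. repeat split; auto. congruence.
Qed.

End Tree.

Lemma red_map_back {T U : Type} (f : T -> U) l : red (map f l) -> red l.
Proof.
  intros H l1 l2 x y e. apply (H (map f l1) (map f l2) (f x) (f y)). rewrite e.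
  rewrite map_app. reflexivity.
Qed.

Lemma red_map_loc {T U : Type} (f : T -> U) l :
  (forall l1 l2 x y z, l = l1 ++ x :: y :: z :: l2 -> f x = f z -> x = z) -> red l -> red (map f l).
Proof.
  intros Hf H m1 m2 a b e.
  apply map_eq_app in e. destruct e as [l1 [l' [e1 [e2 e3]]]].
  apply map_eq_cons in e3. destruct e3 as [x [t1 [e4 [e5 e6]]]].
  apply map_eq_cons in e6. destruct e6 as [y [t2 [e7 [e8 e9]]]].
  apply map_eq_cons in e9. destruct e9 as [z [t3 [e10 [e11 e12]]]].
  subst. assert (x = z) as <-. { apply (Hf l1 t3 x y z); [reflexivity|congruence]. }
  apply (H l1 t3 x y). reflexivity.
Qed.

Lemma last_map {T U : Type} (f : T -> U) p a : f (last p a) = last (map f p) (f a).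
Proof.
  revert a. induction p as [|w p IH]; intro a; [reflexivity|].
  destruct p as [|v p]; [reflexivity|]. exact (IH a).
Qed.

Section Lab.
Context {X Y V : Type} (E : V -> V -> Prop) (inX : V -> bool) (c : V -> V -> X + Y).
Hypothesis Htree : is_tree E.
Hypothesis Hbip : bipartition E inX.
Hypothesis Hcol : legal_colouring E inX c.
Variable x1 : X.
Variable y1 : Y.

Lemma has_nbr w : exists u, E u w.
Proof.
  destruct Hcol as [HX [HY _]]. destruct (inX w) eqn:e.
  - destruct (HX w e) as [_ [_ H]]. destruct (H x1) as [u [Hu _]]. exists u. apply tree_sym; auto.
  - destruct (HY w e) as [_ [_ H]]. destruct (H y1) as [u [Hu _]]. exists u. apply tree_sym; auto.
Qed.

Definition nbr w := pick w (fun u => E u w).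
Definition lab w := c (nbr w) w.

Lemma nbr_spec w : E (nbr w) w.
Proof. apply (pick_spec w (fun u => E u w)). apply has_nbr. Qed.

Lemma lab_c v w : E v w -> c v w = lab w.
Proof. intro H. destruct Hcol as [_ [_ H3]]. apply (H3 w v (nbr w) H (nbr_spec w)). Qed.

Definition sideb (b : bool) (l : X + Y) : Prop :=
  match l with inl _ => b = true | inr _ => b = false end.

Lemma side_nb v w : E v w -> sideb (inX v) (lab w).
Proof.
  intro H. rewrite <- (lab_c v w H). destruct Hcol as [HX [HY _]].
  destruct (inX v) eqn:e.
  - destruct (HX v e) as [H1 _]. destruct (H1 w H) as [x ->]. reflexivity.
  - destruct (HY v e) as [H1 _]. destruct (H1 w H) as [y ->]. reflexivity.
Qed.

Lemma inX_lab w : sideb (negb (inX w)) (lab w).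
Proof.
  pose proof (side_nb _ _ (nbr_spec w)) as H. rewrite (Hbip _ _ (nbr_spec w)) in H. exact H.
Qed.

Lemma lab_inj v w w' : E v w -> E v w' -> lab w = lab w' -> w = w'.
Proof.
  intros H H' e. rewrite <- (lab_c v w H), <- (lab_c v w' H') in e.
  destruct Hcol as [HX [HY _]]. destruct (inX v) eqn:ev.
  - destruct (HX v ev) as [_ [H2 _]]. eauto.
  - destruct (HY v ev) as [_ [H2 _]]. eauto.
Qed.

Definition nbl v l := pick v (fun w => E v w /\ lab w = l).

Lemma nbl_spec v l : sideb (inX v) l -> E v (nbl v l) /\ lab (nbl v l) = l.
Proof.
  intro Hs. apply (pick_spec v (fun w => E v w /\ lab w = l)).
  destruct Hcol as [HX [HY _]]. destruct l as [x|y]; simpl in Hs.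
  - destruct (HX v Hs) as [_ [_ H]]. destruct (H x) as [w [Hw e]]. exists w. split; auto.
    rewrite <- (lab_c v w Hw). exact e.
  - destruct (HY v Hs) as [_ [_ H]]. destruct (H y) as [w [Hw e]]. exists w. split; auto.
    rewrite <- (lab_c v w Hw). exact e.
Qed.

Lemma nbl_eq v w : E v w -> nbl v (lab w) = w.
Proof.
  intro H. destruct (nbl_spec v (lab w) (side_nb v w H)) as [H1 H2].
  apply (lab_inj v); auto.
Qed.

Fixpoint follow (s : V) (ls : list (X + Y)) : list V :=
  match ls with [] => [] | l :: ls' => nbl s l :: follow (nbl s l) ls' end.

Fixpoint okw (b : bool) (ls : list (X + Y)) : Prop :=
  match ls with [] => True | l :: ls' => sideb b l /\ okw (negb b) ls' end.

Lemma follow_labs s p : chain E (s :: p) -> follow s (map lab p) = p.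
Proof.
  revert s. induction p as [|w p IH]; intros s H; [reflexivity|].
  simpl in H. destruct H as [H1 H2]. simpl. rewrite (nbl_eq s w H1). f_equal. apply IH. exact H2.
Qed.

Lemma chain_okw s p : chain E (s :: p) -> okw (inX s) (map lab p).
Proof.
  revert s. induction p as [|w p IH]; intros s H; simpl; auto.
  destruct H as [H1 H2]. split.
  - apply side_nb; auto.
  - rewrite (Hbip s w H1). rewrite Bool.negb_involutive. apply IH. exact H2.
Qed.

Lemma okw_follow s ls : okw (inX s) ls -> chain E (s :: follow s ls) /\ map lab (follow s ls) = ls.
Proof.
  revert s. induction ls as [|l ls IH]; intros s H; simpl; auto.
  destruct H as [H1 H2]. destruct (nbl_spec s l H1) as [Ha Hb].
  assert (okw (inX (nbl s l)) ls) as H3.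
  { rewrite (Hbip _ _ Ha), Bool.negb_involutive in H2. exact H2. }
  destruct (IH _ H3) as [IH1 IH2]. split.
  - destruct (follow (nbl s l) ls); simpl; split; auto.
  - rewrite Hb, IH2. reflexivity.
Qed.

Lemma follow_app s ls1 ls2 : follow s (ls1 ++ ls2) = follow s ls1 ++ follow (last (follow s ls1) s) ls2.
Proof.
  revert s. induction ls1 as [|l ls1 IH]; intro s; [reflexivity|].
  simpl. rewrite IH. f_equal. f_equal. f_equal.
  destruct (follow (nbl s l) ls1) eqn:e; [reflexivity|].
  apply last_def.
Qed.

Lemma red_lab l : chain E l -> red l -> red (map lab l).
Proof.
  intros Hc Hr. apply red_map_loc; auto. intros l1 l2 x y z e Hl.
  subst l. pose proof (chain_app_r E l1 _ Hc) as H. simpl in H. destruct H as [H1 [H2 _]].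
  apply (lab_inj y); auto. apply tree_sym; auto.
Qed.

Section Lift.
Variables (r : V) (sg sg' : X -> X) (ta ta' : Y -> Y).
Hypothesis Hsg : forall x, sg' (sg x) = x.
Hypothesis Hsg' : forall x, sg (sg' x) = x.
Hypothesis Hta : forall y, ta' (ta y) = y.
Hypothesis Hta' : forall y, ta (ta' y) = y.

Definition phi (f : X -> X) (g : Y -> Y) (l : X + Y) : X + Y :=
  match l with inl x => inl (f x) | inr y => inr (g y) end.

Lemma phi_side f g b l : sideb b l -> sideb b (phi f g l).
Proof. destruct l; auto. Qed.

Lemma phi_okw f g b ls : okw b ls -> okw b (map (phi f g) ls).
Proof.
  revert b. induction ls as [|l ls IH]; intros b H; simpl; auto.
  destruct H. split; auto. apply phi_side; auto.
Qed.

Definition path u := pick [] (fun p => chain E (r :: p) /\ red (r :: p) /\ last p r = u).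

Lemma path_spec u : chain E (r :: path u) /\ red (r :: path u) /\ last (path u) r = u.
Proof.
  apply (pick_spec [] (fun p => chain E (r :: p) /\ red (r :: p) /\ last p r = u)).
  apply red_exists; auto.
Qed.

Lemma path_uniq u p : chain E (r :: p) -> red (r :: p) -> last p r = u -> path u = p.
Proof.
  intros H1 H2 H3. destruct (path_spec u) as [H4 [H5 H6]].
  apply (red_uniq E Htree (path u) p r); auto. congruence.
Qed.

Definition word u := map lab (path u).

Section Gl.
Variables (f : X -> X) (g : Y -> Y).
Hypothesis Hfinj : forall a b, f a = f b -> a = b.
Hypothesis Hginj : forall a b, g a = g b -> a = b.
Hypothesis Hfix : phi f g (lab r) = lab r.

Definition gl u := last (follow r (map (phi f g) (word u))) r.

Lemma gl_chain u : chain E (r :: follow r (map (phi f g) (word u))) /\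
                   map lab (follow r (map (phi f g) (word u))) = map (phi f g) (word u).
Proof.
  apply okw_follow. apply phi_okw. apply chain_okw. apply path_spec.
Qed.

Lemma phi_inj : forall a b, phi f g a = phi f g b -> a = b.
Proof.
  intros [a|a] [b|b] e; simpl in e; try discriminate; injection e as e; f_equal; auto.
Qed.

Lemma gl_red u : red (r :: follow r (map (phi f g) (word u))).
Proof.
  destruct (gl_chain u) as [H1 H2].
  apply (red_map_back lab). simpl. rewrite H2.
  rewrite <- Hfix. change (red (map (phi f g) (lab r :: word u))).
  apply red_map_loc.
  - intros l1 l2 x y z _ e. apply phi_inj. exact e.
  - unfold word. change (red (map lab (r :: path u))). apply red_lab; apply path_spec.
Qed.

Lemma gl_path u : path (gl u) = follow r (map (phi f g) (word u)).
Proof.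
  apply path_uniq.
  - apply gl_chain.
  - apply gl_red.
  - reflexivity.
Qed.

Lemma gl_word u : word (gl u) = map (phi f g) (word u).
Proof. unfold word at 1. rewrite gl_path. apply gl_chain. Qed.

Lemma path_r : path r = [].
Proof. apply path_uniq; [exact I|apply red_one|reflexivity]. Qed.

Lemma gl_r : gl r = r.
Proof. unfold gl, word. rewrite path_r. reflexivity. Qed.

Lemma lab_last u : lab u = last (word u) (lab r).
Proof.
  unfold word. rewrite <- last_map. f_equal. symmetry. apply path_spec.
Qed.

Lemma gl_lab u : lab (gl u) = phi f g (lab u).
Proof.
  rewrite (lab_last (gl u)), (gl_word u), (lab_last u). rewrite (last_map (phi f g) (word u) (lab r)). rewrite Hfix. reflexivity.
Qed.

Lemma gl_inX u : inX (gl u) = inX u.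
Proof.
  pose proof (inX_lab (gl u)) as H1. pose proof (inX_lab u) as H2. rewrite gl_lab in H1.
  destruct (lab u); simpl in *; destruct (inX (gl u)), (inX u); simpl in *; congruence.
Qed.

End Gl.

Lemma nb_path u w : E u w -> path w = path u ++ [w] \/ path u = path w ++ [u].
Proof.
  intro H. destruct (path_spec u) as [H1 [H2 H3]].
  assert (HC : chain E (r :: path u ++ [w])).
  { change (chain E ((r :: path u) ++ [w])).
    destruct (exists_last (l := r :: path u) ltac:(discriminate)) as [l [z ez]].
    rewrite ez, <- app_assoc. apply (chain_join E); [rewrite <- ez; exact H1|]. simpl. split; auto.
    assert (z = u) as ->; auto. rewrite <- H3, <- last_cons_same, ez, last_last. reflexivity. }
  destruct (classic (red (r :: path u ++ [w]))) as [Hr|Hr].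
  - left. apply path_uniq; auto. rewrite last_app_ne; [reflexivity|discriminate].
  - right. unfold red in Hr. apply not_all_ex_not in Hr. destruct Hr as [l1 Hr].
    apply not_all_ex_not in Hr. destruct Hr as [l2 Hr].
    apply not_all_ex_not in Hr. destruct Hr as [x Hr].
    apply not_all_ex_not in Hr. destruct Hr as [y Hr]. apply NNPP in Hr.
    destruct l2 as [|v l2] using rev_ind.
    + assert (Hr' : (r :: path u) ++ [w] = (l1 ++ [x; y]) ++ [x]) by (rewrite <- app_assoc; exact Hr).
      apply app_inj_tail in Hr'. destruct Hr' as [Hr' ew]. subst w.
      destruct (l1 ++ [x]) as [|r' q] eqn:eq; [destruct l1; discriminate|].
      assert (Hr2 : r :: path u = (r' :: q) ++ [y]) by (rewrite <- eq, <- app_assoc; exact Hr').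
      simpl in Hr2. injection Hr2 as e1 e2. subst r'.
      assert (Hlx : last q r = x).
      { rewrite <- last_cons_same. change (r :: q) with ((r :: q) : list V). rewrite <- eq. apply last_last. }
      assert (path x = q) as ->.
      { apply path_uniq; auto.
        - rewrite e2 in H1. apply (chain_app_l E (r :: q) [y]). exact H1.
        - rewrite e2 in H2. apply (red_prefix (r :: q) [y]). exact H2. }
      rewrite e2. f_equal. f_equal. rewrite e2, last_last in H3. exact H3.
    + exfalso. clear IHl2. apply (H2 l1 l2 x y).
      assert (Hr' : (r :: path u) ++ [w] = (l1 ++ x :: y :: x :: l2) ++ [v]).
      { rewrite <- app_assoc. exact Hr. }
      apply app_inj_tail in Hr'. tauto.
Qed.

Lemma chain_last (a : V) p z : chain E ((a :: p) ++ [z]) -> E (last p a) z.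
Proof.
  intro H. destruct (exists_last (l := a :: p) ltac:(discriminate)) as [l [q eq]].
  assert (q = last p a) as <-.
  { rewrite <- last_cons_same, eq, last_last. reflexivity. }
  rewrite eq, <- app_assoc in H. simpl in H. apply (chain_mid E l q z []). exact H.
Qed.

Lemma gl_adj f g (Hfi : forall a b, f a = f b -> a = b) (Hgi : forall a b, g a = g b -> a = b)
  (Hfx : phi f g (lab r) = lab r) u w : E u w -> E (gl f g u) (gl f g w).
Proof.
  assert (K : forall u w, path w = path u ++ [w] -> E (gl f g u) (gl f g w)).
  { clear u w. intros u w e.
    destruct (gl_chain f g w) as [Hc _].
    unfold gl at 2. unfold word in *. rewrite e in *. rewrite !map_app in *.
    rewrite follow_app in *. cbn [follow map] in *.
    change (last (follow r (map (phi f g) (map lab (path u)))) r) with (gl f g u) in *.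
    rewrite last_last. change (r :: ?a ++ ?b) with ((r :: a) ++ b) in Hc.
    apply (chain_last r (follow r (map (phi f g) (map lab (path u))))). exact Hc. }
  intro H. destruct (nb_path u w H) as [e|e].
  - apply K; auto.
  - apply tree_sym; auto.
Qed.

Lemma gl_inv f g f' g' (Hfi : forall a b, f a = f b -> a = b) (Hgi : forall a b, g a = g b -> a = b)
  (Hfx : phi f g (lab r) = lab r) (Hf : forall x, f' (f x) = x) (Hg : forall y, g' (g y) = y) u :
  gl f' g' (gl f g u) = u.
Proof.
  unfold gl at 1. rewrite gl_word; auto. rewrite map_map.
  assert (map (fun l => phi f' g' (phi f g l)) (word u) = word u) as ->.
  { rewrite <- map_id. apply map_ext. intros [a|a]; simpl; rewrite ?Hf, ?Hg; reflexivity. }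
  unfold word. rewrite follow_labs by apply path_spec. apply path_spec.
Qed.

Lemma lift_exists : phi sg ta (lab r) = lab r ->
  exists g, is_aut E g /\ g r = r /\ (forall u, inX (g u) = inX u) /\ (forall u, lab (g u) = phi sg ta (lab u)).
Proof.
  intro Hfx.
  assert (Hi1 : forall a b, sg a = sg b -> a = b). { intros a b e. rewrite <- (Hsg a), e. auto. }
  assert (Hi2 : forall a b, ta a = ta b -> a = b). { intros a b e. rewrite <- (Hta a), e. auto. }
  assert (Hi3 : forall a b, sg' a = sg' b -> a = b). { intros a b e. rewrite <- (Hsg' a), e. auto. }
  assert (Hi4 : forall a b, ta' a = ta' b -> a = b). { intros a b e. rewrite <- (Hta' a), e. auto. }
  assert (Hfx' : phi sg' ta' (lab r) = lab r).
  { rewrite <- Hfx at 1. destruct (lab r); simpl; rewrite ?Hsg, ?Hta; reflexivity. }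
  exists (gl sg ta). repeat split.
  - exists (gl sg' ta'). split; intro; apply gl_inv; auto.
  - apply gl_adj; auto.
  - intro H. rewrite <- (gl_inv sg ta sg' ta' Hi1 Hi2 Hfx Hsg Hta u), <- (gl_inv sg ta sg' ta' Hi1 Hi2 Hfx Hsg Hta v).
    apply gl_adj; auto.
  - apply gl_r.
  - intro u. apply gl_inX; auto.
  - intro u. apply gl_lab; auto.
Qed.

End Lift.
Variables (M : (X -> X) -> Prop) (N : (Y -> Y) -> Prop).
Hypothesis HM : perm_group M.
Hypothesis HN : perm_group N.
Hypothesis HMt : transitive M.
Hypothesis HNt : transitive N.
Hypothesis HMs : forall x : X, pw_compact (stab M x).
Hypothesis HNc : pw_compact N.

Definition G := U_c E inX c M N.

Definition Ucl (g : V -> V) : Prop :=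
  is_aut E g /\ (forall v, inX (g v) = inX v) /\
  (forall v, inX v = true -> exists s, M s /\ forall w x, E v w -> lab w = inl x -> lab (g w) = inl (s x)) /\
  (forall v, inX v = false -> exists s, N s /\ forall w y, E v w -> lab w = inr y -> lab (g w) = inr (s y)).

Lemma G_Ucl g : G g <-> Ucl g.
Proof.
  split; intros [Ha [Hi [H1 H2]]]; (split; [exact Ha|split; [exact Hi|split]]);
  pose proof (proj2 Ha) as Hadj.
  - intros v Hv. destruct (H1 v Hv) as [s [Hs Hs']]. exists s. split; auto.
    intros w x Hw Hl. rewrite <- (lab_c (g v) (g w)) by (apply (proj1 (Hadj v w)); auto).
    apply Hs'; auto. rewrite lab_c; auto.
  - intros v Hv. destruct (H2 v Hv) as [s [Hs Hs']]. exists s. split; auto.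
    intros w x Hw Hl. rewrite <- (lab_c (g v) (g w)) by (apply (proj1 (Hadj v w)); auto).
    apply Hs'; auto. rewrite lab_c; auto.
  - intros v Hv. destruct (H1 v Hv) as [s [Hs Hs']]. exists s. split; auto.
    intros w x Hw Hl. rewrite (lab_c (g v) (g w)) by (apply (proj1 (Hadj v w)); auto).
    apply Hs'; auto. rewrite <- (lab_c v w); auto.
  - intros v Hv. destruct (H2 v Hv) as [s [Hs Hs']]. exists s. split; auto.
    intros w x Hw Hl. rewrite (lab_c (g v) (g w)) by (apply (proj1 (Hadj v w)); auto).
    apply Hs'; auto. rewrite <- (lab_c v w); auto.
Qed.

Lemma pg_inv {A : Type} (H : (A -> A) -> Prop) : perm_group H -> forall g, H g ->
  exists h, H h /\ (forall x, h (g x) = x) /\ (forall x, g (h x) = x).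
Proof. intros [_ [_ [_ Hi]]] g Hg. apply Hi; auto. Qed.

Lemma pg_comp {A : Type} (H : (A -> A) -> Prop) : perm_group H -> forall g h, H g -> H h ->
  H (fun x => g (h x)).
Proof. intros [_ [_ [Hc _]]]. auto. Qed.

Lemma pg_id {A : Type} (H : (A -> A) -> Prop) : perm_group H -> H (fun x => x).
Proof. intros [_ [Hid _]]. auto. Qed.

Lemma pg_perm {A : Type} (H : (A -> A) -> Prop) : perm_group H -> forall g, H g -> is_perm g.
Proof. intros [Hp _]. auto. Qed.

Lemma G_id : G (fun v => v).
Proof.
  apply G_Ucl. split; [|split; [|split]].
  - split; [exists (fun v => v); auto|tauto].
  - reflexivity.
  - intros v _. exists (fun x => x). split; [apply pg_id; auto|auto].
  - intros v _. exists (fun x => x). split; [apply pg_id; auto|auto].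
Qed.

Lemma G_comp g h : G g -> G h -> G (fun v => g (h v)).
Proof.
  rewrite !G_Ucl. intros [[[g' [Hg1 Hg2]] Hga] [Hgi [HgX HgY]]] [[[h' [Hh1 Hh2]] Hha] [Hhi [HhX HhY]]].
  split; [|split; [|split]].
  - split.
    + exists (fun v => h' (g' v)). split; intro; rewrite ?Hg1, ?Hh1, ?Hh2, ?Hg2; auto.
    + intros u v. rewrite (Hha u v). apply Hga.
  - intro v. rewrite Hgi. auto.
  - intros v Hv. destruct (HhX v Hv) as [s1 [Hs1 Hs1']].
    destruct (HgX (h v)) as [s2 [Hs2 Hs2']]; [rewrite Hhi; auto|].
    exists (fun x => s2 (s1 x)). split; [apply pg_comp; auto|].
    intros w x Hw Hl. apply Hs2'; [apply (proj1 (Hha _ _)); auto|]. apply Hs1'; auto.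
  - intros v Hv. destruct (HhY v Hv) as [s1 [Hs1 Hs1']].
    destruct (HgY (h v)) as [s2 [Hs2 Hs2']]; [rewrite Hhi; auto|].
    exists (fun x => s2 (s1 x)). split; [apply pg_comp; auto|].
    intros w x Hw Hl. apply Hs2'; [apply (proj1 (Hha _ _)); auto|]. apply Hs1'; auto.
Qed.

Lemma G_inv g : G g -> exists h, G h /\ (forall v, h (g v) = v) /\ (forall v, g (h v) = v).
Proof.
  intro HG. pose proof HG as HG'. rewrite G_Ucl in HG'.
  destruct HG' as [[[h [H1 H2]] Ha] [Hi [HX HY]]].
  exists h. split; auto.
  assert (Hha : forall u v, E u v <-> E (h u) (h v)).
  { intros u v. rewrite (Ha (h u) (h v)), !H2. tauto. }
  assert (Hhi : forall v, inX (h v) = inX v). { intro v. rewrite <- (Hi (h v)), H2. auto. }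
  apply G_Ucl. split; [|split; [|split]].
  - split; [exists g; split; auto|exact Hha].
  - exact Hhi.
  - intros v Hv. destruct (HX (h v)) as [s [Hs Hs']]; [rewrite Hhi; auto|].
    destruct (pg_inv M HM s Hs) as [s' [Hs'M [Hs1 Hs2]]].
    exists s'. split; auto. intros w x Hw Hl.
    assert (Hw' : E (h v) (h w)) by (apply (proj1 (Hha _ _)); auto).
    pose proof (side_nb _ _ Hw') as Hsd. rewrite Hhi, Hv in Hsd.
    destruct (lab (h w)) as [x'|y'] eqn:e; [|discriminate].
    pose proof (Hs' (h w) x' Hw' e) as E1. rewrite H2, Hl in E1. injection E1 as E1.
    rewrite E1, Hs1. reflexivity.
  - intros v Hv. destruct (HY (h v)) as [s [Hs Hs']]; [rewrite Hhi; auto|].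
    destruct (pg_inv N HN s Hs) as [s' [Hs'M [Hs1 Hs2]]].
    exists s'. split; auto. intros w x Hw Hl.
    assert (Hw' : E (h v) (h w)) by (apply (proj1 (Hha _ _)); auto).
    pose proof (side_nb _ _ Hw') as Hsd. rewrite Hhi, Hv in Hsd.
    destruct (lab (h w)) as [x'|y'] eqn:e; [discriminate|].
    pose proof (Hs' (h w) y' Hw' e) as E1. rewrite H2, Hl in E1. injection E1 as E1.
    rewrite E1, Hs1. reflexivity.
Qed.
Definition W := VY inX.

Definition mkW (v : V) (d : W) : W :=
  match Bool.bool_dec (inX v) false with left e => exist _ v e | right _ => d end.

Lemma mkW_val v d : inX v = false -> proj1_sig (mkW v d) = v.
Proof. intro H. unfold mkW. destruct (Bool.bool_dec (inX v) false); simpl; congruence. Qed.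

Lemma val_inj (a b : W) : proj1_sig a = proj1_sig b -> a = b.
Proof.
  destruct a as [a Ha], b as [b Hb]. simpl. intro e. subst b. f_equal.
  apply Eqdep_dec.UIP_dec. apply Bool.bool_dec.
Qed.

Definition rho (g : V -> V) : W -> W := fun y => mkW (g (proj1_sig y)) y.

Lemma rho_val g y : G g -> proj1_sig (rho g y) = g (proj1_sig y).
Proof.
  intros [_ [Hi _]]. unfold rho. apply mkW_val. rewrite Hi. apply (proj2_sig y).
Qed.

Lemma box_iff h : box_product E inX c M N h <-> exists g, G g /\ h = rho g.
Proof.
  split.
  - intros [g [Hg Hh]]. exists g. split; auto. apply functional_extensionality. intro y.
    apply val_inj. rewrite rho_val; auto.
  - intros [g [Hg ->]]. exists g. split; auto. intro y. apply rho_val; auto.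
Qed.

Lemma rho_comp g h : G g -> G h -> rho (fun v => g (h v)) = (fun y => rho g (rho h y)).
Proof.
  intros Hg Hh. apply functional_extensionality. intro y. apply val_inj.
  rewrite rho_val, rho_val, rho_val; auto. apply G_comp; auto.
Qed.

Lemma rho_cont : forall g (L : list W), exists L' : list V,
  forall g', agree_on L' g' g -> agree_on L (rho g') (rho g).
Proof.
  intros g L. exists (map (@proj1_sig _ _) L). intros g' Hg y Hy.
  unfold rho. rewrite Hg; auto. apply in_map. exact Hy.
Qed.

Lemma Y_fin : exists LY : list Y, forall y, In y LY.
Proof.
  destruct (compact_orbit N HNc y1) as [L HL]. exists L. intro y.
  destruct (HNt y1 y) as [n [Hn <-]]. apply HL; auto.
Qed.

Lemma M_orbit a z : forall Lb : list X, exists L, forall m, M m -> In (m a) Lb -> In (m z) L.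
Proof.
  destruct (compact_orbit (stab M a) (HMs a) z) as [Ls HLs].
  induction Lb as [|b Lb IH].
  - exists []. intros m _ [].
  - destruct IH as [L HL].
    destruct (classic (exists mb, M mb /\ mb a = b)) as [[mb [Hmb Hmba]]|Hn].
    + destruct (pg_inv M HM mb Hmb) as [mb' [Hmb' [Hi1 Hi2]]].
      exists (map mb Ls ++ L). intros m Hm [e|Hin].
      * apply in_or_app. left. rewrite <- (Hi2 (m z)). apply in_map. apply (HLs (fun q => mb' (m q))). split.
        -- apply pg_comp; auto.
        -- simpl. rewrite <- e, <- Hmba. apply Hi1.
      * apply in_or_app. right. auto.
    + exists L. intros m Hm [e|Hin]; auto. exfalso. apply Hn. exists m. auto.
Qed.

Lemma M_closed s : (forall F, exists m, M m /\ agree_on F m s) -> M s.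
Proof.
  intro Hs. destruct (Hs [x1]) as [m1 [Hm1 Ha1]].
  destruct (pg_inv M HM m1 Hm1) as [m1' [Hm1' [Hi1 Hi2]]].
  assert (Ht : stab M x1 (fun z => m1' (s z))).
  { apply (compact_closed _ (HMs x1)). intro F.
    destruct (Hs (x1 :: F)) as [m [Hm Ha]]. exists (fun z => m1' (m z)). split.
    - split; [apply pg_comp; auto|]. simpl. rewrite (Ha x1 (or_introl eq_refl)).
      rewrite <- (Ha1 x1 (or_introl eq_refl)). apply Hi1.
    - intros a Ha'. simpl. rewrite Ha; auto. right; auto. }
  destruct Ht as [Ht _].
  assert (s = fun z => m1 (m1' (s z))) as ->.
  { apply functional_extensionality. intro z. rewrite Hi2. reflexivity. }
  apply pg_comp; auto.
Qed.

Lemma N_closed s : (forall F, exists m, N m /\ agree_on F m s) -> N s.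
Proof. apply compact_closed. exact HNc. Qed.

Definition xl (l : X + Y) (d : X) : X := match l with inl x => x | inr _ => d end.
Definition yl (l : X + Y) (d : Y) : Y := match l with inl _ => d | inr y => y end.

Lemma G_closed f : (forall F, exists g, G g /\ agree_on F g f) -> G f.
Proof.
  intro Hf.
  assert (Hadj : forall u w, E u w <-> E (f u) (f w)).
  { intros u w. destruct (Hf [u; w]) as [g [Hg Ha]].
    rewrite <- (Ha u), <- (Ha w) by (simpl; auto). apply (proj2 (proj1 Hg)). }
  assert (Hinj : forall u w, f u = f w -> u = w).
  { intros u w e. destruct (Hf [u; w]) as [g [Hg Ha]].
    rewrite <- (Ha u), <- (Ha w) in e by (simpl; auto).
    destruct Hg as [[[g' [H1 _]] _] _]. rewrite <- (H1 u), <- (H1 w), e. reflexivity. }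
  assert (Hi : forall v, inX (f v) = inX v).
  { intro v. destruct (Hf [v]) as [g [Hg Ha]]. rewrite <- (Ha v) by (simpl; auto). apply Hg. }
  assert (HXl : forall v, inX v = true -> exists s, M s /\
             forall w x, E v w -> lab w = inl x -> lab (f w) = inl (s x)).
  { intros v Hv. set (s := fun x => xl (lab (f (nbl v (inl x)))) x).
    assert (Hloc : forall g, G g -> forall sg, M sg -> (forall w x, E v w -> lab w = inl x -> lab (g w) = inl (sg x)) ->
              forall x, g (nbl v (inl x)) = f (nbl v (inl x)) -> sg x = s x).
    { intros g Hg sg Hsg Hsg' x e. destruct (nbl_spec v (inl x) Hv) as [Hn1 Hn2].
      unfold s. rewrite <- e, (Hsg' _ x Hn1 Hn2). reflexivity. }
    exists s. split.
    - apply M_closed. intro F. destruct (Hf (map (fun x => nbl v (inl x)) F)) as [g [Hg Ha]].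
      pose proof Hg as Hg'. apply G_Ucl in Hg'. destruct Hg' as [_ [_ [HX _]]].
      destruct (HX v Hv) as [sg [Hsg Hsg']]. exists sg. split; auto.
      intros x Hx. apply (Hloc g Hg sg Hsg Hsg' x). apply Ha. apply in_map_iff. exists x; auto.
    - intros w x Hw Hl. destruct (Hf [nbl v (inl x)]) as [g [Hg Ha]].
      pose proof Hg as Hg'. apply G_Ucl in Hg'. destruct Hg' as [_ [_ [HX _]]].
      destruct (HX v Hv) as [sg [Hsg Hsg']].
      rewrite <- (Hloc g Hg sg Hsg Hsg' x) by (apply Ha; simpl; auto).
      rewrite <- (nbl_eq v w Hw), Hl. rewrite <- (Ha (nbl v (inl x))) by (simpl; auto).
      apply Hsg'; [|rewrite <- Hl, (nbl_eq v w Hw); auto]. rewrite <- Hl, (nbl_eq v w Hw). auto. }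
  assert (HYl : forall v, inX v = false -> exists s, N s /\
             forall w y, E v w -> lab w = inr y -> lab (f w) = inr (s y)).
  { intros v Hv. set (s := fun y => yl (lab (f (nbl v (inr y)))) y).
    assert (Hloc : forall g, G g -> forall sg, N sg -> (forall w y, E v w -> lab w = inr y -> lab (g w) = inr (sg y)) ->
              forall y, g (nbl v (inr y)) = f (nbl v (inr y)) -> sg y = s y).
    { intros g Hg sg Hsg Hsg' y e. destruct (nbl_spec v (inr y) Hv) as [Hn1 Hn2].
      unfold s. rewrite <- e, (Hsg' _ y Hn1 Hn2). reflexivity. }
    exists s. split.
    - apply N_closed. intro F. destruct (Hf (map (fun y => nbl v (inr y)) F)) as [g [Hg Ha]].
      pose proof Hg as Hg'. apply G_Ucl in Hg'. destruct Hg' as [_ [_ [_ HY]]].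
      destruct (HY v Hv) as [sg [Hsg Hsg']]. exists sg. split; auto.
      intros y Hy. apply (Hloc g Hg sg Hsg Hsg' y). apply Ha. apply in_map_iff. exists y; auto.
    - intros w y Hw Hl. destruct (Hf [nbl v (inr y)]) as [g [Hg Ha]].
      pose proof Hg as Hg'. apply G_Ucl in Hg'. destruct Hg' as [_ [_ [_ HY]]].
      destruct (HY v Hv) as [sg [Hsg Hsg']].
      rewrite <- (Hloc g Hg sg Hsg Hsg' y) by (apply Ha; simpl; auto).
      rewrite <- (nbl_eq v w Hw), Hl. rewrite <- (Ha (nbl v (inr y))) by (simpl; auto).
      apply Hsg'; [|rewrite <- Hl, (nbl_eq v w Hw); auto]. rewrite <- Hl, (nbl_eq v w Hw). auto. }
  assert (Hsurj1 : forall u b, E (f u) b -> exists u', f u' = b).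
  { intros u b Hb. pose proof (side_nb _ _ Hb) as Hs. rewrite Hi in Hs.
    destruct (inX u) eqn:eu.
    - destruct (HXl u eu) as [s [Hs1 Hs2]]. destruct (pg_inv M HM s Hs1) as [s' [_ [_ Hs3]]].
      destruct (lab b) as [x'|y'] eqn:eb; [|discriminate].
      destruct (nbl_spec u (inl (s' x')) eu) as [Hn1 Hn2].
      exists (nbl u (inl (s' x'))). apply (lab_inj (f u)); auto.
      + apply (proj1 (Hadj _ _)); auto.
      + rewrite (Hs2 _ _ Hn1 Hn2), Hs3. auto.
    - destruct (HYl u eu) as [s [Hs1 Hs2]]. destruct (pg_inv N HN s Hs1) as [s' [_ [_ Hs3]]].
      destruct (lab b) as [x'|y'] eqn:eb; [discriminate|].
      destruct (nbl_spec u (inr (s' y')) eu) as [Hn1 Hn2].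
      exists (nbl u (inr (s' y'))). apply (lab_inj (f u)); auto.
      + apply (proj1 (Hadj _ _)); auto.
      + rewrite (Hs2 _ _ Hn1 Hn2), Hs3. auto. }
  assert (Hsurj : forall t, exists u, f u = t).
  { intro t. destruct Htree as [_ [_ [Hconn _]]]. destruct (Hconn (f t) t) as [p Hp].
    assert (forall p a, (exists u, f u = a) -> walk E a p t -> exists u, f u = t) as HH.
    { induction p0 as [|b p0 IH]; intros a [u Hu] Hw; simpl in Hw.
      - subst. eauto.
      - destruct Hw as [Hab Hw]. apply (IH b); auto. subst a. apply (Hsurj1 u b Hab). }
    apply (HH p (f t)); eauto. }
  apply G_Ucl. split; [|split; [|split]]; auto.
  split; auto.
  exists (fun t => pick t (fun u => f u = t)). split.
  - intro u. apply Hinj. apply (pick_spec (f u) (fun u' => f u' = f u)). eauto.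
  - intro t. apply (pick_spec t (fun u => f u = t)). apply Hsurj.
Qed.
Definition FO (S : (V -> V) -> Prop) u := exists L, forall g, S g -> In (g u) L.

Section FOs.
Variable S : (V -> V) -> Prop.
Hypothesis HS : forall g, S g -> G g.

Lemma hop_Y p u : inX p = false -> FO S p -> E p u -> FO S u.
Proof.
  intros Hp [Lp HLp] Hu. destruct Y_fin as [LY HLY].
  exists (flat_map (fun p' => map (fun y => nbl p' (inr y)) LY) Lp).
  intros g Hg. apply in_flat_map. exists (g p). split; auto.
  pose proof (HS g Hg) as HG. apply G_Ucl in HG. destruct HG as [[_ Ha] [Hi _]].
  assert (Hgu : E (g p) (g u)) by (apply (proj1 (Ha _ _)); auto).
  pose proof (side_nb _ _ Hgu) as Hs. rewrite Hi, Hp in Hs.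
  destruct (lab (g u)) as [x|y] eqn:e; [discriminate|].
  apply in_map_iff. exists y. split; auto. rewrite <- e. apply nbl_eq. auto.
Qed.

Lemma hop_X p q u : inX p = true -> FO S p -> FO S q -> E p q -> E p u -> FO S u.
Proof.
  intros Hp [Lp HLp] [Lq HLq] Hq Hu.
  pose proof (side_nb _ _ Hq) as Hsq. pose proof (side_nb _ _ Hu) as Hsu. rewrite Hp in Hsq, Hsu.
  destruct (lab q) as [a|] eqn:eq; [|discriminate]. destruct (lab u) as [z|] eqn:eu; [|discriminate].
  set (Lb := flat_map (fun q' => match lab q' with inl x => [x] | inr _ => [] end) Lq).
  destruct (M_orbit a z Lb) as [L HL].
  exists (flat_map (fun p' => map (fun x => nbl p' (inl x)) L) Lp).
  intros g Hg. apply in_flat_map. exists (g p). split; auto.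
  pose proof (HS g Hg) as HG. apply G_Ucl in HG. destruct HG as [[_ Ha] [Hi [HX _]]].
  destruct (HX p Hp) as [s [Hs Hs']].
  apply in_map_iff. exists (s z). split.
  - rewrite <- (Hs' u z Hu eu). apply nbl_eq. apply (proj1 (Ha _ _)); auto.
  - apply HL; auto. unfold Lb. apply in_flat_map. exists (g q). split; auto.
    rewrite (Hs' q a Hq eq). left; reflexivity.
Qed.

Lemma FO_prop : forall l a b, chain E (a :: b :: l) -> FO S a -> FO S b -> forall u, In u l -> FO S u.
Proof.
  induction l as [|w l IH]; intros a b Hc Ha Hb u Hu; [destruct Hu|].
  simpl in Hc. destruct Hc as [Hab [Hbw Hc]].
  assert (FO S w).
  { destruct (inX b) eqn:e.
    - apply (hop_X b a w); auto. apply tree_sym; auto.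
    - apply (hop_Y b w); auto. }
  destruct Hu as [<-|Hu]; auto.
  apply (IH b w); auto. simpl. split; auto.
Qed.

Lemma FO_all r : FO S r -> (forall u, E r u -> FO S u) -> forall t, FO S t.
Proof.
  intros Hr Hn t. destruct (red_exists E Htree r t) as [p [Hc [_ Hl]]].
  destruct p as [|b l]; [simpl in Hl; subst; auto|].
  simpl in Hc. destruct Hc as [Hrb Hc].
  destruct l as [|w l]; [simpl in Hl; subst; auto|].
  apply (FO_prop (w :: l) r b); auto.
  - simpl. auto.
  - rewrite <- Hl. change (In (last (w :: l) r) (w :: l)).
    clear. revert w. induction l as [|v l IH]; intro w; [left; reflexivity|].
    right. apply IH.
Qed.
End FOs.

Variable C : (X -> X) -> Prop.
Hypothesis HCc : pw_compact C.
Hypothesis HCg : generates M C.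

Lemma C_M k : C k -> M k.
Proof. apply HCg. Qed.

Lemma C_preorbit z : exists L, forall k, C k -> forall b, k b = z -> In b L.
Proof.
  destruct (HCc X (fun b h => h b = z)) as [l Hl].
  - intros b f Hf. exists [b]. intros h Hh. rewrite Hh by (left; reflexivity). exact Hf.
  - intros f Hf. destruct (pg_perm M HM f (C_M f Hf)) as [f' [_ H2]]. exists (f' z). apply H2.
  - exists l. intros k Hk b Hb. destruct (Hl k Hk) as [i [Hi Hi']].
    destruct (pg_perm M HM k (C_M k Hk)) as [k' [H1 _]].
    assert (b = i) as -> by (rewrite <- (H1 b), <- (H1 i), Hb, Hi'; reflexivity). exact Hi.
Qed.

Definition LC z := pick [] (fun L => forall k, C k -> In (k z) L).
Definition LCi z := pick [] (fun L => forall k, C k -> forall b, k b = z -> In b L).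

Lemma LC_spec z k : C k -> In (k z) (LC z).
Proof. apply (pick_spec [] (fun L => forall k, C k -> In (k z) L)). apply compact_orbit. exact HCc. Qed.

Lemma LCi_spec z k b : C k -> k b = z -> In b (LCi z).
Proof.
  intros Hk Hb. pose proof (pick_spec [] (fun L => forall k, C k -> forall b, k b = z -> In b L) (C_preorbit z)) as H.
  apply (H k Hk b Hb).
Qed.

Fixpoint SX (n : nat) : list X :=
  match n with 0 => [x1] | S n' => SX n' ++ flat_map (fun z => LC z ++ LCi z) (SX n') end.

Lemma SX_mono n a : In a (SX n) -> In a (SX (S n)).
Proof. intro H. simpl. apply in_or_app. left. exact H. Qed.

Lemma SX_le n m a : n <= m -> In a (SX n) -> In a (SX m).
Proof. intro H. induction H; auto. intro. apply SX_mono. auto. Qed.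

Lemma SX_cov : forall a, exists n, In a (SX n).
Proof.
  set (R := fun z => exists n, In z (SX n)).
  set (H := fun g : X -> X => is_perm g /\ (forall z, R z -> R (g z)) /\ (forall z, R (g z) -> R z)).
  assert (HH : perm_group H).
  { split; [|split; [|split]].
    - intros g Hg; apply Hg.
    - split; [exists (fun x => x); auto|]. split; auto.
    - intros g h [[g' [Hg1 Hg2]] [Hg3 Hg4]] [[h' [Hh1 Hh2]] [Hh3 Hh4]]. split; [|split; auto].
      exists (fun x => h' (g' x)). split; intro; rewrite ?Hg1, ?Hh1, ?Hh2, ?Hg2; auto.
    - intros g [[g' [Hg1 Hg2]] [Hg3 Hg4]]. exists g'. split; auto. split; [|split].
      + exists g. auto.
      + intros z Hz. apply Hg4. rewrite Hg2. auto.
      + intros z Hz. rewrite <- (Hg2 z). apply Hg3. auto. }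
  assert (HCH : forall k, C k -> H k).
  { intros k Hk. split; [apply (pg_perm M HM); apply C_M; auto|split].
    - intros z [n Hn]. exists (S n). simpl. apply in_or_app. right. apply in_flat_map.
      exists z. split; auto. apply in_or_app. left. apply LC_spec. auto.
    - intros z [n Hn]. exists (S n). simpl. apply in_or_app. right. apply in_flat_map.
      exists (k z). split; auto. apply in_or_app. right. apply (LCi_spec (k z) k z); auto. }
  intro a. destruct (HMt x1 a) as [m [Hm <-]].
  destruct (proj2 HCg H HH HCH m Hm) as [_ [Hm1 _]]. apply Hm1. exists 0. left. reflexivity.
Qed.
Definition LYl := pick [] (fun L => forall y : Y, In y L).
Lemma LYl_spec y : In y LYl.
Proof. revert y. apply (pick_spec [] (fun L => forall y : Y, In y L)). apply Y_fin. Qed.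

Fixpoint TV (r0 : V) (n : nat) : list V :=
  match n with
  | 0 => [r0]
  | S n' => TV r0 n' ++ flat_map (fun u => map (fun x => nbl u (inl x)) (SX n') ++ map (fun y => nbl u (inr y)) LYl) (TV r0 n')
  end.

Lemma TV_mono r0 n a : In a (TV r0 n) -> In a (TV r0 (S n)).
Proof. intro H. simpl. apply in_or_app. left. exact H. Qed.

Lemma TV_le r0 n m a : n <= m -> In a (TV r0 n) -> In a (TV r0 m).
Proof. intro H. induction H; auto. intro. apply TV_mono. auto. Qed.

Lemma TV_cov r0 : forall t, exists n, In t (TV r0 n).
Proof.
  intro t. destruct Htree as [_ [_ [Hconn _]]]. destruct (Hconn r0 t) as [p Hp].
  assert (forall p a, (exists n, In a (TV r0 n)) -> walk E a p t -> exists n, In t (TV r0 n)) as HH.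
  { induction p0 as [|b p0 IH]; intros a [n Hn] Hw; simpl in Hw.
    - subst. eauto.
    - destruct Hw as [Hab Hw]. apply (IH b); auto.
      rewrite <- (nbl_eq a b Hab). destruct (lab b) as [x|y].
      + destruct (SX_cov x) as [j Hj]. exists (S (n + j)). simpl. apply in_or_app. right.
        apply in_flat_map. exists a. split; [apply (TV_le r0 n); auto; lia|].
        apply in_or_app. left. apply in_map_iff. exists x. split; [reflexivity|]. apply (SX_le j); auto. lia.
      + exists (S n). simpl. apply in_or_app. right. apply in_flat_map. exists a. split; auto.
        apply in_or_app. right. apply in_map_iff. exists y. split; [reflexivity|]. apply LYl_spec. }
  apply (HH p r0); eauto. exists 0. left. reflexivity.
Qed.

Lemma P_compact r : inX r = false -> pw_compact (fun g => G g /\ g r = r).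
Proof.
  intro Hr. apply (konig _) with (T := TV r).
  - intro a. apply (FO_all _ (fun g Hg => proj1 Hg) r).
    + exists [r]. intros g [_ Hg]. left. auto.
    + intros u Hu. apply (hop_Y _ (fun g Hg => proj1 Hg) r u); auto. exists [r]. intros g [_ Hg]. left. auto.
  - intros f Hf. split.
    + apply G_closed. intro F. destruct (Hf F) as [k [[Hk _] Ha]]. eauto.
    + destruct (Hf [r]) as [k [[_ Hk] Ha]]. rewrite <- (Ha r) by (left; auto). exact Hk.
  - apply TV_mono.
  - apply TV_cov.
Qed.

Section LV.
Variable x0 : V.
Hypothesis Hx0 : inX x0 = true.

Definition LK g := G g /\ g x0 = x0 /\ exists s, C s /\ forall x, lab (g (nbl x0 (inl x))) = inl (s x).

Lemma L_compact : pw_compact LK.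
Proof.
  apply (konig _) with (T := TV x0).
  - intro a. apply (FO_all _ (fun g Hg => proj1 Hg) x0).
    + exists [x0]. intros g [_ [Hg _]]. left. auto.
    + intros u Hu. pose proof (side_nb _ _ Hu) as Hs. rewrite Hx0 in Hs.
      destruct (lab u) as [z|] eqn:eu; [|discriminate].
      exists (map (fun x => nbl x0 (inl x)) (LC z)). intros g [Hg [Hg0 [s [Hs1 Hs2]]]].
      apply in_map_iff. exists (s z). split; [|apply LC_spec; auto].
      assert (Hu' : nbl x0 (inl z) = u) by (rewrite <- eu; apply nbl_eq; auto).
      assert (Hl : lab (g u) = inl (s z)) by (rewrite <- Hu'; apply Hs2).
      assert (Hgu : E x0 (g u)) by (rewrite <- Hg0 at 1; apply (proj1 (proj2 (proj1 Hg) _ _)); auto).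
      rewrite <- Hl. apply nbl_eq. exact Hgu.
  - intros f Hf. split; [|split].
    + apply G_closed. intro F. destruct (Hf F) as [k [[Hk _] Ha]]. eauto.
    + destruct (Hf [x0]) as [k [[_ [Hk _]] Ha]]. rewrite <- (Ha x0) by (left; auto). exact Hk.
    + exists (fun x => xl (lab (f (nbl x0 (inl x)))) x). split.
      * apply (compact_closed C HCc). intro F.
        destruct (Hf (map (fun x => nbl x0 (inl x)) F)) as [k [[_ [_ [s [Hs1 Hs2]]]] Ha]].
        exists s. split; auto. intros x Hx. rewrite <- Ha by (apply in_map_iff; exists x; auto). rewrite Hs2. reflexivity.
      * intro x. destruct (Hf [nbl x0 (inl x)]) as [k [[_ [_ [s [Hs1 Hs2]]]] Ha]].
        rewrite <- Ha by (left; auto). rewrite Hs2. reflexivity.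
  - apply TV_mono.
  - apply TV_cov.
Qed.
End LV.
Lemma lift_G r sg ta : M sg -> N ta -> phi sg ta (lab r) = lab r ->
  exists g, G g /\ g r = r /\ forall w, lab (g w) = phi sg ta (lab w).
Proof.
  intros Hsg Hta Hfx.
  destruct (pg_inv M HM sg Hsg) as [sg' [_ [H1 H2]]].
  destruct (pg_inv N HN ta Hta) as [ta' [_ [H3 H4]]].
  destruct (lift_exists r sg sg' ta ta' H1 H2 H3 H4 Hfx) as [g [Ha [Hr [Hi Hl]]]].
  exists g. split; [|split; auto].
  apply G_Ucl. split; [|split; [|split]]; auto.
  - intros v _. exists sg. split; auto. intros w x _ e. rewrite Hl, e. reflexivity.
  - intros v _. exists ta. split; auto. intros w y _ e. rewrite Hl, e. reflexivity.
Qed.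

Lemma rho_id : rho (fun v => v) = (fun y => y).
Proof. apply functional_extensionality. intro y. apply val_inj. rewrite rho_val; auto. apply G_id. Qed.

Lemma compact_ext {A : Type} (K1 K2 : (A -> A) -> Prop) : (forall f, K1 f <-> K2 f) -> pw_compact K1 -> pw_compact K2.
Proof.
  intros He H I O Ho Hc. destruct (H I O Ho) as [l Hl].
  - intros f Hf. apply Hc. apply He. auto.
  - exists l. intros f Hf. apply Hl. apply He. auto.
Qed.

Section Gen.
Variables (y0 x0 : V).
Hypothesis Hy0 : inX y0 = false.
Hypothesis Hx0 : inX x0 = true.
Hypothesis Hxy : E x0 y0.

Definition KB (h : W -> W) : Prop := exists g, ((G g /\ g y0 = y0) \/ LK x0 g) /\ h = rho g.

Variable H : (W -> W) -> Prop.
Hypothesis HH : perm_group H.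
Hypothesis HK : forall h, KB h -> H h.

Definition nb0 x := nbl x0 (inl x).
Definition FX (g : V -> V) (m : X -> X) := forall x, g (nb0 x) = nb0 (m x).

Lemma nb0_E x : E x0 (nb0 x).
Proof. apply nbl_spec. exact Hx0. Qed.
Lemma nb0_lab x : lab (nb0 x) = inl x.
Proof. apply nbl_spec. exact Hx0. Qed.

Lemma G_adj g u v : G g -> E u v -> E (g u) (g v).
Proof. intros Hg e. apply (proj1 (proj2 (proj1 Hg) u v)). exact e. Qed.

Lemma nb0_eq w : E x0 w -> w = nb0 (xl (lab w) x1).
Proof.
  intro Hw. pose proof (side_nb _ _ Hw) as Hs. rewrite Hx0 in Hs.
  unfold nb0. destruct (lab w) eqn:e; [|discriminate]. simpl. rewrite <- e. symmetry. apply nbl_eq. auto.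
Qed.

Lemma FX_of g m : G g -> g x0 = x0 -> (forall x, lab (g (nb0 x)) = inl (m x)) -> FX g m.
Proof.
  intros Hg H0 Hl x. rewrite (nb0_eq (g (nb0 x))), Hl; [reflexivity|].
  rewrite <- H0 at 1. apply G_adj; auto. apply nb0_E.
Qed.

Definition M' m := M m /\ forall g, G g -> g x0 = x0 -> FX g m -> H (rho g).

Lemma liftX m : M m -> exists g, G g /\ g x0 = x0 /\ FX g m.
Proof.
  intro Hm. destruct (lift_G x0 m (fun y => y) Hm (pg_id N HN)) as [g [Hg [H0 Hl]]].
  - pose proof (inX_lab x0) as Hs. rewrite Hx0 in Hs. destruct (lab x0); [discriminate|reflexivity].
  - exists g. split; auto. split; auto. apply FX_of; auto. intro x. rewrite Hl, nb0_lab. reflexivity.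
Qed.

Lemma H_inv_rho g g' : G g -> G g' -> (forall v, g' (g v) = v) -> (forall v, g (g' v) = v) ->
  H (rho g') -> H (rho g).
Proof.
  intros Hg Hg' H1 H2 Hr. destruct (pg_inv H HH (rho g') Hr) as [k [Hk [K1 K2]]].
  assert (k = rho g) as <-; auto.
  apply functional_extensionality. intro y.
  assert (E1 : rho g' (rho g y) = y).
  { change (rho g' (rho g y)) with ((fun z => rho g' (rho g z)) y). rewrite <- rho_comp; auto.
    assert ((fun v => g' (g v)) = (fun v => v)) as -> by (apply functional_extensionality; auto).
    rewrite rho_id. reflexivity. }
  rewrite <- E1 at 1. apply K1.
Qed.

Lemma M'_group : perm_group M'.
Proof.
  split; [|split; [|split]].
  - intros g [Hg _]. apply (pg_perm M HM); auto.
  - split; [apply pg_id; auto|]. intros g Hg H0 HF. apply HK. exists g. split; auto. left. split; auto.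
    pose proof (nb0_eq y0 Hxy) as e. rewrite e, HF. reflexivity.
  - intros m1 m2 [Hm1 Hm1'] [Hm2 Hm2']. split; [apply pg_comp; auto|].
    intros g Hg H0 HF. destruct (liftX m2 Hm2) as [g2 [Hg2 [H2 HF2]]].
    destruct (G_inv g2 Hg2) as [g2' [Hg2' [I1 I2]]].
    destruct (pg_inv M HM m2 Hm2) as [m2' [Hm2i [J1 J2]]].
    assert (HF2' : FX g2' m2').
    { intro x. rewrite <- (I1 (nb0 (m2' x))), HF2, J2. reflexivity. }
    assert (H0' : g2' x0 = x0). { rewrite <- H2 at 1. apply I1. }
    assert (Hr1 : H (rho (fun v => g (g2' v)))).
    { apply Hm1'. apply G_comp; auto. rewrite H0', H0; auto.
      intro x. rewrite HF2', HF, J2. reflexivity. }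
    assert (Hr2 : H (rho g2)) by (apply Hm2'; auto).
    replace (rho g) with (rho (fun v => (fun v => g (g2' v)) (g2 v))).
    + rewrite (rho_comp (fun v => g (g2' v)) g2) by (first [assumption | apply G_comp; assumption]). apply pg_comp; auto.
    + f_equal. apply functional_extensionality. intro v. rewrite I1. reflexivity.
  - intros m [Hm Hm']. destruct (pg_inv M HM m Hm) as [m' [Hmi [J1 J2]]].
    exists m'. split; auto. split; auto.
    intros g Hg H0 HF. destruct (G_inv g Hg) as [g' [Hg' [I1 I2]]].
    apply (H_inv_rho g g'); auto. apply Hm'; auto.
    + rewrite <- H0 at 1. apply I1.
    + intro x. assert (nb0 x = g (nb0 (m x))) as ->. { rewrite HF, J1. reflexivity. }
      rewrite I1. reflexivity.
Qed.

Lemma step1 g : G g -> g x0 = x0 -> H (rho g).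
Proof.
  intros Hg H0. pose proof Hg as Hu. apply G_Ucl in Hu. destruct Hu as [_ [_ [HX _]]].
  destruct (HX x0 Hx0) as [s [Hs Hs']].
  assert (M' s) as [_ Hs2].
  { apply (proj2 HCg M' M'_group); auto. intros k Hk. split; [apply C_M; auto|].
    intros g' Hg' H0' HF. apply HK. exists g'. split; auto. right. split; auto. split; auto.
    exists k. split; auto. intro x. change (nbl x0 (inl x)) with (nb0 x). rewrite HF. apply nb0_lab. }
  apply Hs2; auto. apply FX_of; auto. intro x. apply Hs'; [apply nb0_E|apply nb0_lab].
Qed.

Definition Q t := exists g, G g /\ H (rho g) /\ g y0 = t.

Lemma Q_step t x t' : Q t -> E t x -> E x t' -> Q t'.
Proof.
  intros [g [Hg [Hgh Hgt]]] Htx Hxt.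
  destruct (G_inv g Hg) as [g' [Hg' [I1 I2]]].
  assert (Hx1 : E y0 (g' x)). { rewrite <- (I1 y0), Hgt. apply G_adj; auto. }
  pose proof (side_nb _ _ Hx1) as S1. pose proof (side_nb _ _ (tree_sym E Htree _ _ Hxy)) as S2. rewrite Hy0 in S1, S2.
  destruct (lab (g' x)) as [|b] eqn:eb; [discriminate|]. destruct (lab x0) as [|a] eqn:ea; [discriminate|].
  destruct (HNt a b) as [ta [Hta Htab]].
  destruct (lift_G y0 (fun x => x) ta (pg_id M HM) Hta) as [p [Hp [Hp0 Hpl]]].
  { pose proof (inX_lab y0) as Hs. rewrite Hy0 in Hs. destruct (lab y0); [reflexivity|discriminate]. }
  assert (Hpx : p x0 = g' x).
  { apply (lab_inj y0); auto.
    - rewrite <- Hp0 at 1. apply G_adj; auto. apply tree_sym; auto.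
    - rewrite Hpl, ea, eb. simpl. rewrite Htab. reflexivity. }
  assert (Hrp : H (rho p)) by (apply HK; exists p; split; auto).
  destruct (G_inv p Hp) as [p' [Hp' [P1 P2]]].
  set (t2 := p' (g' t')).
  assert (Ht2 : E x0 t2).
  { unfold t2. rewrite <- (P1 x0), Hpx. apply G_adj; auto. apply G_adj; auto. }
  pose proof (side_nb _ _ Ht2) as S3. pose proof (side_nb _ _ Hxy) as S4. rewrite Hx0 in S3, S4.
  destruct (lab t2) as [b'|] eqn:eb'; [|discriminate]. destruct (lab y0) as [a'|] eqn:ea'; [|discriminate].
  destruct (HMt a' b') as [sg [Hsg Hsab]].
  destruct (lift_G x0 sg (fun y => y) Hsg (pg_id N HN)) as [q [Hq [Hq0 Hql]]].
  { rewrite ea. reflexivity. }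
  assert (Hqy : q y0 = t2).
  { apply (lab_inj x0); auto.
    - rewrite <- Hq0 at 1. apply G_adj; auto.
    - rewrite Hql, ea', eb'. simpl. rewrite Hsab. reflexivity. }
  assert (Hrq : H (rho q)) by (apply step1; auto).
  exists (fun v => g ((fun v => p (q v)) v)). split; [|split].
  - apply G_comp; auto. apply G_comp; auto.
  - rewrite (rho_comp g (fun v => p (q v))) by (first [assumption | apply G_comp; assumption]). apply pg_comp; auto.
    rewrite (rho_comp p q) by auto. apply pg_comp; auto.
  - simpl. rewrite Hqy. unfold t2. rewrite P2, I2. reflexivity.
Qed.

Lemma Q_all_n : forall n l a, length l <= n -> chain E (a :: l) -> inX a = false -> Q a ->
  inX (last l a) = false -> Q (last l a).
Proof.
  induction n as [|n IH]; intros l a Hn Hc Ha HQ Hl.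
  - destruct l; [exact HQ|simpl in Hn; lia].
  - destruct l as [|x l]; [exact HQ|].
    destruct l as [|t' l].
    + simpl in Hl, Hc. destruct Hc as [Hax _]. rewrite (Hbip _ _ Hax) in Ha.
      rewrite Hl in Ha. discriminate.
    + simpl in Hc. destruct Hc as [Hax [Hxt Hc]].
      assert (Qt : Q t') by (apply (Q_step a x t'); auto).
      assert (It : inX t' = false).
      { rewrite (Hbip _ _ Hax) in Ha. rewrite (Hbip _ _ Hxt) in Ha. destruct (inX t'); auto. }
      change (last (x :: t' :: l) a) with (last (t' :: l) a) in *.
      rewrite (last_def t' l a t'), last_cons_same in *.
      apply (IH l t'); auto. simpl in Hn. lia.
Qed.

Lemma Q_all t : inX t = false -> Q t.
Proof.
  intro Ht. destruct (red_exists E Htree y0 t) as [p [Hc [_ Hl]]]. rewrite <- Hl in *.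
  apply (Q_all_n (length p)); auto.
  exists (fun v => v). split; [apply G_id|split; [|reflexivity]].
  apply HK. exists (fun v => v). split; [left; split; [apply G_id|reflexivity]|reflexivity].
Qed.

Lemma gen_all g : G g -> H (rho g).
Proof.
  intro Hg. destruct (Q_all (g y0)) as [h [Hh [Hhh Hht]]].
  { rewrite (proj1 (proj2 Hg)). exact Hy0. }
  destruct (G_inv h Hh) as [h' [Hh' [I1 I2]]].
  assert (Hk : H (rho (fun v => h' (g v)))).
  { apply HK. exists (fun v => h' (g v)). split; auto. left. split; [apply G_comp; auto|].
    rewrite <- Hht. apply I1. }
  replace (rho g) with (rho (fun v => h ((fun v => h' (g v)) v))).
  - rewrite (rho_comp h (fun v => h' (g v))) by (first [assumption | apply G_comp; assumption]). apply pg_comp; auto.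
  - f_equal. apply functional_extensionality. intro v. rewrite I2. reflexivity.
Qed.

End Gen.
Lemma stab_compact y : pw_compact (stab (box_product E inX c M N) y).
Proof.
  apply (compact_ext (fun h => exists g, (G g /\ g (proj1_sig y) = proj1_sig y) /\ h = rho g)).
  - intro h. split.
    + intros [g [[Hg Hgy] ->]]. split.
      * apply box_iff. eauto.
      * apply val_inj. rewrite rho_val; auto.
    + intros [Hb Hhy]. apply box_iff in Hb. destruct Hb as [g [Hg ->]]. exists g. split; auto.
      split; auto. rewrite <- (rho_val g y Hg), Hhy. reflexivity.
  - apply compact_image; [apply rho_cont|]. apply P_compact. apply (proj2_sig y).
Qed.

Lemma cg_nonempty (y0 : W) : compactly_generated (box_product E inX c M N).
Proof.
  set (y0v := proj1_sig y0). set (x0 := nbr y0v).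
  assert (Hxy : E x0 y0v) by apply nbr_spec.
  assert (Hy0 : inX y0v = false) by apply (proj2_sig y0).
  assert (Hx0 : inX x0 = true) by (rewrite (Hbip _ _ Hxy), Hy0; reflexivity).
  exists (KB y0v x0). split.
  - apply (compact_ext (fun h => exists g, (fun g => (G g /\ g y0v = y0v) \/ LK x0 g) g /\ h = rho g)).
    + intro h. reflexivity.
    + apply compact_image; [apply rho_cont|]. apply compact_union.
      * apply P_compact. exact Hy0.
      * apply L_compact. exact Hx0.
  - split.
    + intros k [g [Hg ->]]. apply box_iff. exists g. split; auto.
      destruct Hg as [[Hg _]|[Hg _]]; auto.
    + intros H HH HK b Hb. apply box_iff in Hb. destruct Hb as [g [Hg ->]].
      apply (gen_all y0v x0 Hy0 Hx0 Hxy H HH HK g Hg).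
Qed.

Lemma final_main : compactly_generated (box_product E inX c M N) /\
  (forall y : W, pw_compact (stab (box_product E inX c M N) y)).
Proof.
  split; [|apply stab_compact].
  destruct (classic (inhabited W)) as [[y0]|Hn].
  - apply cg_nonempty. exact y0.
  - exists (box_product E inX c M N). split.
    + apply compact_subsingleton. intros f g _ _. apply functional_extensionality.
      intro y. exfalso. apply Hn. constructor. exact y.
    + split; auto.
Qed.

End Lab.


Theorem theorem6p3 (X Y : Type) (M : (X -> X) -> Prop) (N : (Y -> Y) -> Prop)
    (V : Type) (E : V -> V -> Prop) (inX : V -> bool) (c : V -> V -> X + Y) :
  (exists x1 x2 : X, x1 <> x2) ->
  (exists y1 y2 : Y, y1 <> y2) ->
  perm_group M -> perm_group N ->
  transitive M -> transitive N ->
  compactly_generated M ->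
  (forall x : X, pw_compact (stab M x)) ->
  pw_compact N ->
  is_tree E -> bipartition E inX -> legal_colouring E inX c ->
  compactly_generated (box_product E inX c M N) /\
  (forall y : VY inX, pw_compact (stab (box_product E inX c M N) y)).
Proof.
  intros [x1 _] [y1 _] HM HN HMt HNt [C [HCc HCg]] HMs HNc Htree Hbip Hcol.
  exact (final_main E inX c Htree Hbip Hcol x1 y1 M N HM HN HMt HNt HMs HNc C HCc HCg).
Qed.
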